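(* Strong coherence does not satisfy directionality. That is, there exist an SBAF $\mathcal{SB}=\langle\mathcal{L},A,\to,\text{supp}\rangle$, a set $U\subseteq A$ and a set $E\subseteq U$ with the following properties: (i) no argument of $A\setminus U$ attacks an argument of $U$, and no argument $b\in U$ is supported by $A\setminus U$ (i.e. $Prem(b)\not\subseteq Sent(A\setminus U)$ for all $b\in U$); (ii) $E$ is strongly coherent in the restricted SBAF $\mathcal{SB}_{|U}$; (iii) there is no strongly coherent extension $E'\subseteq A$ of $\mathcal{SB}$ with $E=E'\cap U$.
   Context: A language is a triple $\mathcal{L}=\langle L,\overline{\cdot},n\rangle$: $L$ is a nonempty set of sentences; $\overline{\cdot}$ assigns to each $s\in L$ a set $\overline{s}\subseteq L$ of sentences incompatible with $s$, and is symmetric ($s\in\overline{t}\iff t\in\overline{s}$); $n$ is a partial naming function assigning to an argument $a$ a sentence $n(a)\in L$ (if $n(a)$ is undefined, put $\overline{n(a)}:=\emptyset$), and $\overline{n(\langle\{t\},t\rangle)}=\emptyset$ for all $t\in L$. An argument is a pair $a=\langle Prem(a),Conc(a)\rangle$ with $Prem(a)$ a nonempty finite subset of $L$ and $Conc(a)\in L$; $Sent(a):=Prem(a)\cup\{Conc(a)\}$ and $Sent(E):=\bigcup_{a\in E}Sent(a)$. The minimal argument for $s$ is $\langle\{s\},s\rangle$. A set $E$ of arguments supports an argument $a$ if $Prem(a)\subseteq Sent(E)$; $E$ contains undercutting information for $a$ if $\overline{n(a)}\cap Sent(E)\neq\emptyset$. Argument $a$ attacks $b$ ($a\to b$) if $Conc(a)\in\overline{s}$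 for some $s\in Sent(b)$ or $Conc(a)\in\overline{n(b)}$. An SBAF is $\mathcal{SB}=\langle\mathcal{L},A,\to,\text{supp}\rangle$ with $A$ a finite set of arguments in $\mathcal L$ and attack and support as just defined. For $E\subseteq A$: $E\to b$ if some $a\in E$ attacks $b$; $E$ defends $a\in A$ if $E\to b$ for every $b\in A$ with $b\to a$; $E$ is conflict-free if there are no $a,b\in E$ with $a\to b$; $E$ is admissible if it is conflict-free and defends each of its elements. $E\subseteq A$ is strongly coherent if it is admissible and for every $a\in A$: if $E$ supports $a$ and $E$ contains no undercutting information for $a$, then $a\in E$. For $U\subseteq A$, $\mathcal{SB}_{|U}=\langle\mathcal{L},U,\to\cap(U\times U),\text{supp restricted to }U\rangle$ is the SBAF with argument set $U$; all notions (defence, admissibility, coherence) in $\mathcal{SB}_{|U}$ are computed with $U$ in place of $A$. *)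

(* Defs.v *)
From Stdlib Require Import List.

Set Implicit Arguments.

Record Arg (S : Type) := mkArg { prem : S -> Prop; conc : S }.

(* A language <L, overline, n> over a sentence carrier S.
   [incomp s t] means t \in overline(s); [name a = Some s] means n(a) = s,
   [name a = None] means n(a) is undefined. *)
Record Language (S : Type) := mkLanguage {
  Lset : S -> Prop;
  incomp : S -> S -> Prop;
  name : Arg S -> option S }.

Definition minimal_arg (S : Type) (t : S) : Arg S := mkArg (fun x => x = t) t.

(* overline(n(a)), with overline(n(a)) = empty if n(a) undefined *)
Definition ov_name (S : Type) (Lg : Language S) (a : Arg S) (x : S) : Prop :=
  match name Lg a with Some s => incomp Lg s x | None => False end.

Definition wf_language (S : Type) (Lg : Language S) : Prop :=
  (exists s, Lset Lg s) /\
  (forall s t, incomp Lg s t -> Lset Lg s /\ Lset Lg t) /\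
  (forall s t, incomp Lg s t <-> incomp Lg t s) /\
  (forall a s, name Lg a = Some s -> Lset Lg s) /\
  (forall t x, ~ ov_name Lg (minimal_arg t) x).

Definition finite_set (T : Type) (P : T -> Prop) : Prop :=
  exists l : list T, forall x, P x <-> In x l.

Definition is_argument (S : Type) (Lg : Language S) (a : Arg S) : Prop :=
  (exists x, prem a x) /\ finite_set (prem a) /\
  (forall x, prem a x -> Lset Lg x) /\ Lset Lg (conc a).

Definition Sent (S : Type) (a : Arg S) (x : S) : Prop := prem a x \/ x = conc a.
Definition SentE (S : Type) (E : Arg S -> Prop) (x : S) : Prop :=
  exists a, E a /\ Sent a x.

Definition supports (S : Type) (E : Arg S -> Prop) (a : Arg S) : Prop :=
  forall x, prem a x -> SentE E x.
Definition undercut_info (S : Type) (Lg : Language S) (E : Arg S -> Prop) (a : Arg S) : Prop :=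
  exists x, ov_name Lg a x /\ SentE E x.

Definition attacks (S : Type) (Lg : Language S) (a b : Arg S) : Prop :=
  (exists s, Sent b s /\ incomp Lg s (conc a)) \/ ov_name Lg b (conc a).

Definition is_SBAF (S : Type) (Lg : Language S) (A : Arg S -> Prop) : Prop :=
  wf_language Lg /\ finite_set A /\ (forall a, A a -> is_argument Lg a).

Definition subset (T : Type) (P Q : T -> Prop) : Prop := forall x, P x -> Q x.

(* notions relative to the argument set A (used with A := U for SB_|U) *)
Definition defends (S : Type) (Lg : Language S) (A E : Arg S -> Prop) (a : Arg S) : Prop :=
  forall b, A b -> attacks Lg b a -> exists c, E c /\ attacks Lg c b.
Definition conflict_free (S : Type) (Lg : Language S) (E : Arg S -> Prop) : Prop :=
  forall a b, E a -> E b -> ~ attacks Lg a b.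
Definition admissible (S : Type) (Lg : Language S) (A E : Arg S -> Prop) : Prop :=
  conflict_free Lg E /\ (forall a, E a -> defends Lg A E a).
Definition strongly_coherent (S : Type) (Lg : Language S) (A E : Arg S -> Prop) : Prop :=
  subset E A /\ admissible Lg A E /\
  (forall a, A a -> supports E a -> ~ undercut_info Lg E a -> E a).

(* Main.v *)
Require Import Defs.
From Stdlib Require Import List.

Definition ab : Arg nat := mkArg (fun x => x = 0) 1.
Definition ae : Arg nat := mkArg (fun x => x = 1) 2.
Definition ad : Arg nat := mkArg (fun x => x = 0 \/ x = 2) 3.
Definition Lg0 : Language nat := mkLanguage (fun _ => True) (fun _ _ => False) (fun _ => None).

Lemma noatt a b : ~ attacks Lg0 a b.
Proof. unfold attacks, ov_name; simpl. intros [[s [_ H]]|H]; exact H. Qed.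

Lemma nound E a : ~ undercut_info Lg0 E a.
Proof. unfold undercut_info, ov_name; simpl. intros [x [H _]]; exact H. Qed.

Theorem mainTheorem1 :
  exists (S : Type) (Lg : Language S) (A U E : Arg S -> Prop),
    is_SBAF Lg A /\ subset U A /\ subset E U /\
    (* (i) *)
    (forall a b, A a -> ~ U a -> U b -> ~ attacks Lg a b) /\
    (forall b, U b -> ~ supports (fun a => A a /\ ~ U a) b) /\
    (* (ii) *)
    strongly_coherent Lg U E /\
    (* (iii) *)
    ~ (exists E' : Arg S -> Prop,
         strongly_coherent Lg A E' /\ (forall a, E a <-> (E' a /\ U a))).
Proof.
  exists nat, Lg0, (fun a => a = ab \/ a = ae \/ a = ad),
    (fun a => a = ab \/ a = ad), (fun a => a = ab).
  split; [|split; [|split; [|split; [|split; [|split]]]]].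
  - split; [|split].
    + unfold wf_language, ov_name; simpl. split; [exists 0; exact I|]. repeat split; intros; simpl in *; try tauto; try discriminate.
    + exists (ab :: ae :: ad :: nil). intros x; simpl; split; [intros [H|[H|H]]; subst; auto | intros [H|[H|[H|[]]]]; subst; auto].
    + intros a [ -> | [ -> | -> ] ]; unfold is_argument, finite_set; simpl;
        (split; [eauto|split; [|split; auto]]).
      * exists (0 :: nil); simpl; intuition.
      * exists (1 :: nil); simpl; intuition.
      * exists (0 :: 2 :: nil); simpl; intuition.
  - intros a; tauto.
  - intros a ->; tauto.
  - intros a b _ _ _; apply noatt.
  - intros b [ -> | -> ] H.
    + destruct (H 0 eq_refl) as [a [[[ -> | [ -> | -> ] ] Hu] Hs]];
        try (apply Hu; tauto); unfold Sent in Hs; simpl in Hs; discriminate || (destruct Hs; discriminate).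
    + destruct (H 0 (or_introl eq_refl)) as [a [[[ -> | [ -> | -> ] ] Hu] Hs]];
        try (apply Hu; tauto); unfold Sent in Hs; simpl in Hs; destruct Hs; discriminate.
  - split; [intros a ->; tauto|split].
    + split; [intros a b _ _; apply noatt|intros a _ b _ Hat; exfalso; exact (noatt _ _ Hat)].
    + intros a [ -> | -> ] Hs _; auto.
      destruct (Hs 2 (or_intror eq_refl)) as [c [-> Hc]].
      unfold Sent in Hc; simpl in Hc; destruct Hc; discriminate.
  - intros [E' [[_ [_ Hcl]] Hiff]].
    assert (Hb : E' ab) by (apply Hiff; reflexivity).
    assert (He : E' ae).
    { apply Hcl; [tauto| |apply nound].
      intros x Hx; simpl in Hx; subst; exists ab; split; auto; right; reflexivity. }
    assert (Hd : E' ad).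
    { apply Hcl; [tauto| |apply nound].
      intros x [Hx|Hx]; subst.
      - exists ab; split; auto; left; reflexivity.
      - exists ae; split; auto; right; reflexivity. }
    assert (H : ad = ab) by (apply Hiff; tauto).
    discriminate H.
Qed.
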